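(* Let $f(1),f(2),f(3)$ be positive real numbers with $f(1)+f(2)+f(3)=1$. Then there exist a $1$-balanced sequence $\mathbf{u}$ over $\{a,b\}$, a $1$-balanced sequence $\mathbf{b}$ over $\{2,3\}$ and the constant sequence $\mathbf{a}=1^\omega$ such that the ternary sequence $\mathbf{v}=\mathrm{colour}(\mathbf{u},\mathbf{a},\mathbf{b})$ satisfies: (1) for each $i\in\{1,2,3\}$ the frequency of the letter $i$ in $\mathbf{v}$ exists and equals $f(i)$; (2) $\mathbf{v}$ is $2$-balanced.
   Context: A sequence $\mathbf{u}$ over an alphabet $\mathcal A$ is $C$-balanced ($C\ge 1$ an integer) if for any two factors $u,v$ of $\mathbf{u}$ with $|u|=|v|$ and every letter $x\in\mathcal A$ we have $\bigl||u|_x-|v|_x\bigr|\le C$, where $|w|_x$ is the number of occurrences of $x$ in $w$. The frequency of a letter $x$ in $\mathbf{u}=u_0u_1\cdots$ is $\lim_{n\to\infty}|u_0\cdots u_{n-1}|_x/n$, if the limit exists. Colouring: given a sequence $\mathbf{u}$ over $\{a,b\}$ and sequences $\mathbf{a},\mathbf{b}$ over disjoint alphabets $\mathcal A,\mathcal B$, $\mathrm{colour}(\mathbf{u},\mathbf{a},\mathbf{b})$ is the sequence over $\mathcal A\cup\mathcal B$ obtained from $\mathbf{u}$ by replacing the subsequence of all occurrences of $a$ (in order) by the sequence $\mathbf{a}$ and the subsequence of all occurrences of $b$ (in order) by the sequence $\mathbf{b}$. *)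

(* Defs.v *)
From Stdlib Require Import Reals Arith Bool.
Open Scope R_scope.

Fixpoint cnt (p : nat -> bool) (i n : nat) : nat :=
  match n with
  | O => O
  | S m => ((if p (i + m)%nat then 1 else 0) + cnt p i m)%nat
  end.

Definition occ {T : Type} (eqb : T -> T -> bool) (u : nat -> T) (x : T) (i n : nat) : nat :=
  cnt (fun k => eqb (u k) x) i n.

Definition balanced {T : Type} (eqb : T -> T -> bool) (C : nat) (u : nat -> T) : Prop :=
  forall (x : T) (i j n : nat), (occ eqb u x i n <= occ eqb u x j n + C)%nat.

Definition has_freq {T : Type} (eqb : T -> T -> bool) (u : nat -> T) (x : T) (l : R) : Prop :=
  Un_cv (fun n => INR (occ eqb u x 0 n) / INR n) l.

(* Colouring: the binary sequence u over {a,b} is encoded as nat -> bool with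
   true = a, false = b.  The n-th letter of u, if it is the k-th occurrence of a
   (k counted from 0), is replaced by a k; similarly for b. *)
Definition colour {T : Type} (u : nat -> bool) (a b : nat -> T) : nat -> T :=
  fun n => if u n then a (cnt (fun k => u k) 0 n)
           else b (cnt (fun k => negb (u k)) 0 n).

(* Main.v *)
Require Import Defs.
From Stdlib Require Import Reals Arith Bool Lia Lra ZArith.
Open Scope R_scope.

Lemma ip_diff x d : d - 1 < IZR (Int_part (x + d) - Int_part x) < d + 1.
Proof.
  destruct (base_Int_part x); destruct (base_Int_part (x+d)).
  rewrite minus_IZR; lra.
Qed.

Lemma ip_bnd x : x - 1 < IZR (Int_part x) <= x.
Proof. destruct (base_Int_part x); lra. Qed.

Lemma ip0 : Int_part 0 = 0%Z.
Proof.
  destruct (base_Int_part 0).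
  assert (IZR (Int_part 0) < IZR 1) by lra.
  assert (IZR (-1) < IZR (Int_part 0)) by lra.
  apply lt_IZR in H1; apply lt_IZR in H2; lia.
Qed.

Definition A (al : R) (k : nat) : Z := Int_part (INR k * al).
Definition mu (al : R) (k : nat) : bool := Z.eqb (A al (S k) - A al k) 1.
Definition bw (be : R) (m : nat) : nat := if mu be m then 2%nat else 3%nat.
Definition Bc (u : nat -> bool) (k : nat) : nat := cnt (fun k => negb (u k)) 0 k.

Lemma A0 al : A al 0 = 0%Z.
Proof. unfold A; simpl; rewrite Rmult_0_l; apply ip0. Qed.

Lemma A_step al k : 0 <= al <= 1 -> A al (S k) = (A al k + if mu al k then 1 else 0)%Z.
Proof.
  intros H. unfold mu, A.
  rewrite S_INR. replace ((INR k + 1) * al) with (INR k * al + al) by ring.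
  pose proof (ip_diff (INR k * al) al) as [H1 H2].
  assert (IZR (-1) < IZR (Int_part (INR k * al + al) - Int_part (INR k * al))) by lra.
  assert (IZR (Int_part (INR k * al + al) - Int_part (INR k * al)) < IZR 2) by lra.
  apply lt_IZR in H0; apply lt_IZR in H3.
  destruct (Z.eqb_spec (Int_part (INR k * al + al) - Int_part (INR k * al)) 1); lia.
Qed.

Lemma Abal al i j n : (A al (i+n) - A al i <= A al (j+n) - A al j + 1)%Z.
Proof.
  unfold A. rewrite !plus_INR.
  replace ((INR i + INR n) * al) with (INR i * al + INR n * al) by ring.
  replace ((INR j + INR n) * al) with (INR j * al + INR n * al) by ring.
  pose proof (ip_diff (INR i * al) (INR n * al)).
  pose proof (ip_diff (INR j * al) (INR n * al)).
  match goal with |- (?a <= ?b + 1)%Z => assert (IZR (a - b) < IZR 2) end.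
  { rewrite minus_IZR; lra. }
  apply lt_IZR in H1; lia.
Qed.

Lemma Cbal be (P0 P1 Q0 Q1 : nat) : 0 <= be <= 1 ->
  (Z.of_nat P1 - Z.of_nat P0 <= Z.of_nat Q1 - Z.of_nat Q0 + 1)%Z ->
  (A be P1 - A be P0 <= A be Q1 - A be Q0 + 2)%Z /\
  ((Z.of_nat P1 - A be P1) - (Z.of_nat P0 - A be P0) <= (Z.of_nat Q1 - A be Q1) - (Z.of_nat Q0 - A be Q0) + 2)%Z.
Proof.
  intros Hb H.
  assert (Hr : INR P1 - INR P0 <= INR Q1 - INR Q0 + 1).
  { rewrite !INR_IZR_INZ. apply IZR_le in H. rewrite plus_IZR, !minus_IZR in H. exact H. }
  unfold A.
  replace (INR P1 * be) with (INR P0 * be + (INR P1 - INR P0) * be) by ring.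
  replace (INR Q1 * be) with (INR Q0 * be + (INR Q1 - INR Q0) * be) by ring.
  pose proof (ip_diff (INR P0 * be) ((INR P1 - INR P0) * be)).
  pose proof (ip_diff (INR Q0 * be) ((INR Q1 - INR Q0) * be)).
  assert (Hm : (INR P1 - INR P0 - (INR Q1 - INR Q0)) * (1 - be) <= 1 - be).
  { replace (1 - be) with (1 * (1-be)) at 2 by ring. apply Rmult_le_compat_r; lra. }
  assert (Hm2 : (INR P1 - INR P0) * be <= (INR Q1 - INR Q0) * be + 1).
  { assert ((INR P1 - INR P0) * be <= (INR Q1 - INR Q0 + 1) * be) by (apply Rmult_le_compat_r; lra). nra. }
  split.
  - match goal with |- (?a <= ?b + 2)%Z => assert (IZR (a - b) < IZR 3) end.
    { rewrite minus_IZR; lra. }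
    apply lt_IZR in H2; lia.
  - match goal with |- (?a <= ?b + 2)%Z => assert (IZR (a - b) < IZR 3) end.
    { rewrite !minus_IZR. rewrite !minus_IZR in H0, H1. rewrite <- !INR_IZR_INZ. idtac. lra. }
    apply lt_IZR in H2; lia.
Qed.

Lemma cnt_F (p : nat -> bool) (F : nat -> Z) :
  (forall k, F (S k) = (F k + if p k then 1 else 0)%Z) ->
  forall i n, Z.of_nat (cnt p i n) = (F (i + n)%nat - F i)%Z.
Proof.
  intros HF i n; induction n as [|n IH].
  - simpl. rewrite Nat.add_0_r. lia.
  - simpl cnt. rewrite Nat2Z.inj_add, IH, Nat.add_succ_r, HF.
    destruct (p (i + n)%nat); change (Z.of_nat 1) with 1%Z; change (Z.of_nat 0) with 0%Z; lia.
Qed.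

Lemma cnt_ext p q i n : (forall k, p k = q k) -> cnt p i n = cnt q i n.
Proof. intros H; induction n; simpl; [reflexivity| rewrite H, IHn; reflexivity]. Qed.

Lemma cnt_false p i n : (forall k, p k = false) -> cnt p i n = 0%nat.
Proof. intros H; induction n; simpl; [reflexivity| rewrite H, IHn; reflexivity]. Qed.

Lemma freq_lemma (c : nat -> nat) l : (forall n, Rabs (INR (c n) - INR n * l) <= 2) ->
  Un_cv (fun n => INR (c n) / INR n) l.
Proof.
  intros H eps Heps.
  destruct (INR_unbounded (2/eps)) as [N HN].
  exists N. intros n Hn. unfold R_dist.
  assert (HnN : INR N <= INR n) by (apply le_INR; lia).
  assert (Hpos : 0 < INR n).
  { assert (0 < 2/eps) by (unfold Rdiv; apply Rmult_lt_0_compat; [lra| apply Rinv_0_lt_compat; lra]). lra. }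
  replace (INR (c n) / INR n - l) with ((INR (c n) - INR n * l) / INR n) by (field; lra).
  unfold Rdiv. rewrite Rabs_mult, Rabs_inv, (Rabs_right (INR n)) by lra.
  specialize (H n).
  assert (2 < eps * INR n).
  { assert (eps * (2/eps) < eps * INR n) by (apply Rmult_lt_compat_l; lra).
    replace (eps * (2/eps)) with 2 in H0 by (field; lra). lra. }
  apply (Rmult_lt_reg_r (INR n)); [lra|].
  rewrite Rmult_assoc, Rinv_l by lra.
  assert (0 <= Rabs (INR (c n) - INR n * l)) by apply Rabs_pos.
  lra.
Qed.

Lemma Fneg_step al k : 0 <= al <= 1 ->
  (Z.of_nat (S k) - A al (S k) = (Z.of_nat k - A al k) + if negb (mu al k) then 1 else 0)%Z.
Proof. intros H. rewrite Nat2Z.inj_succ, (A_step al k H). destruct (mu al k); simpl; lia. Qed.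

Theorem theorem1 (f : nat -> R) :
  0 < f 1%nat -> 0 < f 2%nat -> 0 < f 3%nat ->
  f 1%nat + f 2%nat + f 3%nat = 1 ->
  exists (u : nat -> bool) (b : nat -> nat),
    balanced Bool.eqb 1 u /\
    (forall n, b n = 2%nat \/ b n = 3%nat) /\
    balanced Nat.eqb 1 b /\
    let v := colour u (fun _ => 1%nat) b in
    (forall i : nat, (1 <= i <= 3)%nat -> has_freq Nat.eqb v i (f i)) /\
    balanced Nat.eqb 2 v.
Proof.
  intros h1 h2 h3 hs.
  set (al := f 1%nat). set (be := f 2%nat / (f 2%nat + f 3%nat)).
  assert (Hbe1 : be * (f 2%nat + f 3%nat) = f 2%nat) by (unfold be; field; lra).
  assert (Hal : 0 <= al <= 1) by (unfold al; lra).
  assert (Hbe : 0 <= be <= 1) by (split; nra).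
  assert (Hf2 : f 2%nat = be * (1 - al)) by (replace (1 - al) with (f 2%nat + f 3%nat) by (unfold al; lra); lra).
  assert (Hf3 : f 3%nat = (1 - be) * (1 - al)) by (replace (1 - al) with (f 2%nat + f 3%nat) by (unfold al; lra); lra).
  set (u := mu al). set (b := bw be).
  assert (HuF : forall i n, Z.of_nat (cnt u i n) = (A al (i+n)%nat - A al i)%Z).
  { apply cnt_F. intro k. apply A_step; exact Hal. }
  assert (HnuF : forall i n, Z.of_nat (cnt (fun k => negb (u k)) i n) =
     ((Z.of_nat (i+n) - A al (i+n)%nat) - (Z.of_nat i - A al i))%Z).
  { apply (cnt_F _ (fun k => Z.of_nat k - A al k)%Z). intro k. apply Fneg_step; exact Hal. }
  exists u, b. split; [|split; [|split]].
  - intros x i j n. unfold occ. destruct x.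
    + rewrite (cnt_ext _ u i n) by (intro k; destruct (u k); reflexivity). rewrite (cnt_ext _ u j n) by (intro k; destruct (u k); reflexivity).
      pose proof (HuF i n); pose proof (HuF j n); pose proof (Abal al i j n); lia.
    + rewrite (cnt_ext _ (fun k => negb (u k)) i n) by (intro k; destruct (u k); reflexivity). rewrite (cnt_ext _ (fun k => negb (u k)) j n) by (intro k; destruct (u k); reflexivity).
      pose proof (HnuF i n); pose proof (HnuF j n); pose proof (Abal al j i n); lia.
  - intro n. unfold b, bw. destruct (mu be n); auto.
  - intros x i j n. unfold occ.
    destruct (Nat.eq_dec x 2) as [->|n2]; [|destruct (Nat.eq_dec x 3) as [->|n3]].
    + rewrite (cnt_ext _ (mu be) i n) by (intro k; unfold b, bw; destruct (mu be k); reflexivity). rewrite (cnt_ext _ (mu be) j n) by (intro k; unfold b, bw; destruct (mu be k); reflexivity).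
      pose proof (cnt_F (mu be) (A be) (fun k => A_step be k Hbe) i n).
      pose proof (cnt_F (mu be) (A be) (fun k => A_step be k Hbe) j n).
      pose proof (Abal be i j n); lia.
    + rewrite (cnt_ext _ (fun k => negb (mu be k)) i n) by (intro k; unfold b, bw; destruct (mu be k); reflexivity). rewrite (cnt_ext _ (fun k => negb (mu be k)) j n) by (intro k; unfold b, bw; destruct (mu be k); reflexivity).
      pose proof (cnt_F _ (fun k => Z.of_nat k - A be k)%Z (fun k => Fneg_step be k Hbe) i n).
      pose proof (cnt_F _ (fun k => Z.of_nat k - A be k)%Z (fun k => Fneg_step be k Hbe) j n).
      pose proof (Abal be j i n); cbv beta in *; lia.
    + rewrite (cnt_false _ i n); [lia|].
      intro k; unfold b, bw; destruct (mu be k); apply Nat.eqb_neq; lia.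
  - cbv zeta. set (v := colour u (fun _ => 1%nat) b).
    assert (vk : forall k, v k = if u k then 1%nat else bw be (Bc u k)) by reflexivity.
    assert (Bcs : forall k, Bc u (S k) = ((if negb (u k) then 1 else 0) + Bc u k)%nat) by reflexivity.
    assert (BcZ : forall k, Z.of_nat (Bc u k) = (Z.of_nat k - A al k)%Z).
    { intro k. unfold Bc. rewrite HnuF, Nat.add_0_l, A0. lia. }
    assert (F1 : forall k, Nat.eqb (v k) 1 = u k).
    { intro k. rewrite vk. destruct (u k); [reflexivity|]. unfold bw; destruct (mu be _); reflexivity. }
    assert (F2 : forall k, A be (Bc u (S k)) = (A be (Bc u k) + if Nat.eqb (v k) 2 then 1 else 0)%Z).
    { intro k. rewrite Bcs, vk. destruct (u k); simpl.
      - lia.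
      - rewrite (A_step be _ Hbe). unfold bw. destruct (mu be (Bc u k)); simpl; lia. }
    assert (F3 : forall k, (Z.of_nat (Bc u (S k)) - A be (Bc u (S k)) =
                 (Z.of_nat (Bc u k) - A be (Bc u k)) + if Nat.eqb (v k) 3 then 1 else 0)%Z).
    { intro k. rewrite Bcs, vk. destruct (u k); simpl negb; cbv iota.
      - rewrite Nat.add_0_l. simpl Nat.eqb; lia.
      - change ((1 + Bc u k)%nat) with (S (Bc u k)). rewrite Nat2Z.inj_succ.
        rewrite (A_step be _ Hbe). unfold bw. destruct (mu be (Bc u k)); simpl Nat.eqb; lia. }
    assert (C2 : forall i n, Z.of_nat (cnt (fun k => Nat.eqb (v k) 2) i n) = (A be (Bc u (i+n)) - A be (Bc u i))%Z).
    { apply (cnt_F _ (fun k => A be (Bc u k))). exact F2. }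
    assert (C3 : forall i n, Z.of_nat (cnt (fun k => Nat.eqb (v k) 3) i n) =
        ((Z.of_nat (Bc u (i+n)) - A be (Bc u (i+n))) - (Z.of_nat (Bc u i) - A be (Bc u i)))%Z).
    { apply (cnt_F _ (fun k => Z.of_nat (Bc u k) - A be (Bc u k))%Z). exact F3. }
    assert (vr : forall k, v k = 1%nat \/ v k = 2%nat \/ v k = 3%nat).
    { intro k. rewrite vk. destruct (u k); auto. unfold bw; destruct (mu be _); auto. }
    split.
    + intros x [Hx1 Hx3]. unfold has_freq. apply freq_lemma. intro n. unfold occ.
      pose proof (ip_bnd (INR n * al)) as Ha. fold (A al n) in Ha.
      assert (Hx : x = 1%nat \/ x = 2%nat \/ x = 3%nat) by lia. destruct Hx as [Hx|[Hx|Hx]]; subst x.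
      * rewrite (cnt_ext _ u) by exact F1.
        rewrite INR_IZR_INZ, HuF, A0. simpl (0 + n)%nat.
        apply Rabs_le. fold al. rewrite Z.sub_0_r. lra.
      * rewrite INR_IZR_INZ, C2. simpl (0+n)%nat. change (Bc u 0) with 0%nat. rewrite A0, Z.sub_0_r.
        pose proof (ip_bnd (INR (Bc u n) * be)) as Hb. fold (A be (Bc u n)) in Hb.
        assert (HB : INR (Bc u n) = INR n - IZR (A al n)).
        { rewrite INR_IZR_INZ, BcZ, minus_IZR, <- INR_IZR_INZ. reflexivity. }
        set (X := INR n * al - IZR (A al n)).
        assert (INR (Bc u n) * be = INR n * f 2%nat + X * be) by (rewrite HB, Hf2; unfold X; ring).
        assert (0 <= X * be <= 1) by (unfold X; split; nra).
        apply Rabs_le. lra.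
      * rewrite INR_IZR_INZ, C3. simpl (0+n)%nat. change (Bc u 0) with 0%nat. rewrite A0.
        pose proof (ip_bnd (INR (Bc u n) * be)) as Hb. fold (A be (Bc u n)) in Hb.
        assert (HB : INR (Bc u n) = INR n - IZR (A al n)).
        { rewrite INR_IZR_INZ, BcZ, minus_IZR, <- INR_IZR_INZ. reflexivity. }
        set (X := INR n * al - IZR (A al n)).
        assert (INR (Bc u n) * (1 - be) = INR n * f 3%nat + X * (1 - be)) by (rewrite HB, Hf3; unfold X; ring).
        assert (0 <= X * (1 - be) <= 1) by (unfold X; split; nra).
        rewrite !minus_IZR. simpl (Z.of_nat 0). rewrite <- INR_IZR_INZ.
        apply Rabs_le. split; nra.
    + intros x i j n. unfold occ.
      destruct (Nat.eq_dec x 1) as [->|n1]; [|destruct (Nat.eq_dec x 2) as [->|n2]; [|destruct (Nat.eq_dec x 3) as [->|n3]]].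
      * rewrite (cnt_ext _ u i n) by exact F1. rewrite (cnt_ext _ u j n) by exact F1.
        pose proof (HuF i n); pose proof (HuF j n); pose proof (Abal al i j n); lia.
      * assert (Hh : (Z.of_nat (Bc u (i+n)) - Z.of_nat (Bc u i) <= Z.of_nat (Bc u (j+n)) - Z.of_nat (Bc u j) + 1)%Z).
        { rewrite !BcZ. pose proof (Abal al j i n). lia. }
        destruct (Cbal be _ _ _ _ Hbe Hh) as [Hc _].
        pose proof (C2 i n); pose proof (C2 j n); lia.
      * assert (Hh : (Z.of_nat (Bc u (i+n)) - Z.of_nat (Bc u i) <= Z.of_nat (Bc u (j+n)) - Z.of_nat (Bc u j) + 1)%Z).
        { rewrite !BcZ. pose proof (Abal al j i n). lia. }
        destruct (Cbal be _ _ _ _ Hbe Hh) as [_ Hc].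
        pose proof (C3 i n); pose proof (C3 j n); lia.
      * rewrite (cnt_false _ i n); [lia|].
        intro k; apply Nat.eqb_neq; destruct (vr k) as [->|[->| ->]]; lia.
Qed.
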